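(* Consider the looped Markov chain $\mathcal{G}'$ described in the context, with parameters $r\ge1$, $p,p_c\in[0,1]$, and let $\nu=p\cdot p_c$ with $\nu\cdot r<1$. Then $m_\sharp(s_i^\alpha)\in\Theta(\nu^{-t})$ for $\alpha=\alpha_1\cdots\alpha_t$, i.e. there are constants $0<c_1\le c_2<\infty$ depending only on $r,p,p_c$ such that $c_1\nu^{-t}\le m_\sharp(s_i^\alpha)\le c_2\nu^{-t}$ for all $t\ge0$, all $\alpha\in\{1,\ldots,r\}^t$ and all $1\le i\le r$.
   Context: Fix an integer $r\ge1$ and probabilities $p,p_c\in[0,1]$. Words $\alpha\in\{1,\ldots,r\}^*$ (finite sequences, $\varepsilon$ empty word, $\alpha\cdot i$ concatenation, $r^k$ the word of $k$ letters $r$) are called blocks. The Markov chain $\mathcal{G}'$ has the countable state space $\{s_i^\alpha, c_i^\alpha : 1\le i\le r,\ \alpha\in\{1,\ldots,r\}^*\}\cup\{\sharp\}$, initial state $\sharp$, and transition probabilities (all unlisted ones are $0$): $p(\sharp,s_1^\varepsilon)=1$; $p(s_i^\alpha,c_i^\alpha)=p$ for $1\le i\le r$; $p(s_i^\alpha,s_{i+1}^\alpha)=1-p$ for $1\le i<r$; $p(c_i^\alpha,s_1^{\alpha\cdot i})=p_c$ for $1\le i\le r$; $p(c_i^\alpha,s_{i+1}^\alpha)=1-p_c$ for $1\le i<r$; for every word $\gamma=\beta\cdot i\cdot r^k$ with $1\le i<r$, $k\ge0$: $p(s_r^\gamma,s_{i+1}^\beta)=1-p$, $p(c_r^\gamma,s_{i+1}^\beta)=1-p_c$;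 for every $\gamma\in r^*$ (including $\varepsilon$): $p(s_r^\gamma,\sharp)=1-p$, $p(c_r^\gamma,\sharp)=1-p_c$. For states $x,y$, $m_x(y)$ denotes the expected value of $\inf\{n\ge0: X_n=y\}$ for the chain $(X_n)$ started at $X_0=x$. *)

(* Defs.v *)
From HB Require Import structures.
From mathcomp Require Import all_boot all_order all_algebra.
From mathcomp Require Import all_classical all_reals all_analysis.
Set Implicit Arguments. Unset Strict Implicit. Unset Printing Implicit Defensive.
Import Order.TTheory GRing.Theory Num.Theory.
Local Open Scope ring_scope.

(* Letters and indices are natural numbers; only indices in [1, r] and words
   over {1..r} are meaningful (all others are unreachable from sharp). *)
Inductive state : Type :=
| sharp : state
| s : nat -> seq nat -> state
| c : nat -> seq nat -> state.

Definition state_eqb (x y : state) : bool :=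
  match x, y with
  | sharp, sharp => true
  | s i a, s j b => (i == j) && (a == b)
  | c i a, c j b => (i == j) && (a == b)
  | _, _ => false
  end.

Lemma state_eqP : Equality.axiom state_eqb.
Proof.
case=> [|i a|i a] [|j b|j b] /=; try by constructor.
- by apply: (iffP andP) => [[/eqP -> /eqP ->]|[-> ->]].
- by apply: (iffP andP) => [[/eqP -> /eqP ->]|[-> ->]].
Qed.

HB.instance Definition _ := hasDecEq.Build state state_eqP.

(* For a word gamma, [strip r gamma] is [Some (beta, i)] if
   gamma = beta . i . r^k with i <> r, and [None] if gamma is in r^*. *)
Definition strip (r : nat) (a : seq nat) : option (seq nat * nat) :=
  let b := rev a in
  match drop (find (fun x => x != r) b) b with
  | [::] => None
  | j :: rest => Some (rev rest, j)
  end.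

Section Chain.
Variable R : realType.

Definition back (r : nat) (a : seq nat) (q : R) : seq (state * R) :=
  match strip r a with
  | None => [:: (sharp, q)]
  | Some (b, j) => [:: (s j.+1 b, q)]
  end.

Definition step (r : nat) (p pc : R) (x : state) : seq (state * R) :=
  match x with
  | sharp => [:: (s 1 [::], 1)]
  | s i a => (c i a, p) ::
      (if (i < r)%N then [:: (s i.+1 a, 1 - p)]
       else if i == r then back r a (1 - p) else [::])
  | c i a => (s 1 (rcons a i), pc) ::
      (if (i < r)%N then [:: (s i.+1 a, 1 - pc)]
       else if i == r then back r a (1 - pc) else [::])
  end.

(* all paths of length n started at x that do not visit y at times < n,
   recorded as (endpoint, probability of the path) *)
Fixpoint tpaths (r : nat) (p pc : R) (x y : state) (n : nat)
  : seq (state * R) :=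
  match n with
  | 0 => [:: (x, 1)]
  | n'.+1 => flatten [seq (if z.1 == y then [::]
                          else [seq (w.1, z.2 * w.2) | w <- step r p pc z.1])
                     | z <- tpaths r p pc x y n']
  end.

(* P_x(T_y = n), where T_y = inf {n >= 0 : X_n = y} *)
Definition hitP (r : nat) (p pc : R) (x y : state) (n : nat) : R :=
  \sum_(z <- tpaths r p pc x y n | z.1 == y) z.2.

(* m_x(y) = E_x[T_y] in the extended reals: +oo if P_x(T_y < oo) < 1 *)
Definition mhit (r : nat) (p pc : R) (x y : state) : \bar R :=
  if (\sum_(0 <= n <oo) (hitP r p pc x y n)%:E == 1%E)%E
  then (\sum_(0 <= n <oo) (n%:R * hitP r p pc x y n)%:E)%E
  else (+oo)%E.

End Chain.

(* Main.v *)
Require Import Defs.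
From mathcomp Require Import all_boot all_order all_algebra.
From mathcomp Require Import all_classical all_reals all_analysis.
From mathcomp Require Import ring lra.
Import Order.TTheory GRing.Theory Num.Theory.
Local Open Scope ring_scope.
Set Implicit Arguments. Unset Strict Implicit. Unset Printing Implicit Defensive.

Definition Ex (R : realType) r (p pc : R) (g : state -> R) x :=
  \sum_(w <- step r p pc x) w.2 * g w.1.
Definition Top (R : realType) r (p pc : R) y (g : state -> R) z :=
  if z == y then 0 else Ex r p pc g z.
Definition hit (R : realType) r (p pc : R) y n : state -> R :=
  iter n (Top r p pc y) (fun z => (z == y)%:R).

Definition Phi (R : realType) r (p pc : R) x y n (g : state -> R) :=
  \sum_(z <- tpaths r p pc x y n) z.2 * g z.1.

Lemma PhiS (R : realType) r (p pc : R) x y n g :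
  Phi r p pc x y n.+1 g = Phi r p pc x y n (Top r p pc y g).
Proof.
rewrite /Phi /= big_flatten /= big_map; apply: eq_bigr => z _.
rewrite /Top; case: eqP => _; first by rewrite big_nil mulr0.
rewrite big_map /Ex mulr_sumr; apply: eq_bigr => w _ /=; by rewrite mulrA.
Qed.

Lemma Phi_iter (R : realType) r (p pc : R) x y n g :
  Phi r p pc x y n g = iter n (Top r p pc y) g x.
Proof.
elim: n g => [|n IH] g; first by rewrite /Phi /= big_seq1 mul1r.
by rewrite PhiS IH iterSr.
Qed.

Lemma hitPE (R : realType) r (p pc : R) x y n :
  hitP r p pc x y n = hit r p pc y n x.
Proof.
rewrite /hitP /hit -Phi_iter /Phi big_mkcond /=; apply: eq_bigr => z _.
by case: eqP => _; rewrite ?mulr1 ?mulr0.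
Qed.
Definition vl r (b : nat) := (1 <= b <= r)%N.
Definition valid r x := match x with sharp => true | s i a | c i a => vl r i && all (vl r) a end.
Definition backt r a := match strip r a with None => sharp | Some (b, j) => s j.+1 b end.
Definition nxt r j a := if (j < r)%N then s j.+1 a else backt r a.

Lemma back_eq (R : realType) r a (q : R) : back r a q = [:: (backt r a, q)].
Proof. by rewrite /back /backt; case: strip => [[]|]. Qed.

Lemma backt_nil r : backt r [::] = sharp.
Proof. by []. Qed.

Lemma backt_rcons r a m : backt r (rcons a m) = if m == r then backt r a else s m.+1 a.
Proof.
rewrite /backt /strip /=.
case: eqP => [->|/eqP nr]; rewrite rev_rcons /=; first by rewrite eqxx /=.
by rewrite nr /= revK.
Qed.

Lemma Ex_sharp (R : realType) r (p pc : R) g : Ex r p pc g sharp = g (s 1 [::]).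
Proof. by rewrite /Ex /= big_seq1 mul1r. Qed.

Lemma Ex_s (R : realType) r (p pc : R) g j a : (1 <= j <= r)%N ->
  Ex r p pc g (s j a) = p * g (c j a) + (1 - p) * g (nxt r j a).
Proof.
move=> /andP[j1 jr]; rewrite /Ex /= big_cons /nxt; case: ltnP => jr' /=.
  by rewrite big_seq1.
have -> : j = r by apply/eqP; rewrite eqn_leq jr jr'.
by rewrite eqxx back_eq big_seq1.
Qed.

Lemma Ex_c (R : realType) r (p pc : R) g j a : (1 <= j <= r)%N ->
  Ex r p pc g (c j a) = pc * g (s 1 (rcons a j)) + (1 - pc) * g (nxt r j a).
Proof.
move=> /andP[j1 jr]; rewrite /Ex /= big_cons /nxt; case: ltnP => jr' /=.
  by rewrite big_seq1.
have -> : j = r by apply/eqP; rewrite eqn_leq jr jr'.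
by rewrite eqxx back_eq big_seq1.
Qed.

Lemma valid_backt r a : all (vl r) a -> valid r (backt r a).
Proof.
elim/last_ind: a => [|a m IH] //.
rewrite all_rcons => /andP[vm va]; rewrite backt_rcons.
case: eqP => [_|/eqP mr]; first exact: IH.
rewrite /= va andbT /vl /=; move: vm mr; rewrite /vl => /andP[m1 mr'] mr.
by rewrite ltn_neqAle mr mr'.
Qed.

Lemma valid_nxt r j a : (1 <= j <= r)%N -> all (vl r) a -> valid r (nxt r j a).
Proof.
move=> /andP[j1 jr] va; rewrite /nxt; case: ltnP => jr'; last exact: valid_backt.
by rewrite /= va andbT /vl /= jr'.
Qed.

Lemma backt_gen (R : realType) r (F : state -> R) (f : seq nat -> R) :
  F sharp = f [::] ->
  (forall a, all (vl r) a -> f (rcons a r) = f a) ->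
  (forall a m, all (vl r) a -> vl r m -> m != r -> F (s m.+1 a) = f (rcons a m)) ->
  forall a, all (vl r) a -> F (backt r a) = f a.
Proof.
move=> F0 fr fm; elim/last_ind => [|a m IH] //.
rewrite all_rcons => /andP[vm va]; rewrite backt_rcons.
case: eqP => [->|/eqP mr]; first by rewrite fr // IH.
exact: fm.
Qed.

Lemma Ex_lin (R : realType) r (p pc : R) k1 k2 g1 g2 x :
  Ex r p pc (fun z => k1 * g1 z + k2 * g2 z) x = k1 * Ex r p pc g1 x + k2 * Ex r p pc g2 x.
Proof.
rewrite /Ex !mulr_sumr -big_split /=; apply: eq_bigr => w _.
by rewrite mulrDr !mulrA [w.2 * k1]mulrC [w.2 * k2]mulrC.
Qed.

Lemma Ex_sum (R : realType) r (p pc : R) N (g : nat -> state -> R) x :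
  Ex r p pc (fun z => \sum_(m < N) g m z) x = \sum_(m < N) Ex r p pc (g m) x.
Proof.
rewrite /Ex exchange_big /=; apply: eq_bigr => w _; by rewrite mulr_sumr.
Qed.

Lemma Ex_const (R : realType) r (p pc : R) k x : valid r x ->
  Ex r p pc (fun _ => k) x = k.
Proof.
case: x => [|j a|j a] /=; first by rewrite Ex_sharp.
  by move=> /andP[vj _]; rewrite Ex_s //; ring.
by move=> /andP[vj _]; rewrite Ex_c //; ring.
Qed.

Lemma Ex_mono (R : realType) r (p pc : R) g1 g2 x : (1 <= r)%N ->
  0 <= p <= 1 -> 0 <= pc <= 1 -> valid r x ->
  (forall z, valid r z -> g1 z <= g2 z) -> Ex r p pc g1 x <= Ex r p pc g2 x.
Proof.
move=> r1 /andP[p0 p1] /andP[c0 c1].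
case: x => [|j a|j a] /=; first by move=> _ H; rewrite !Ex_sharp; apply: H; rewrite /= /vl r1.
  move=> /andP[vj va] H; rewrite !Ex_s //.
  apply: lerD; (apply: ler_wpM2l; first by rewrite ?subr_ge0); apply: H.
    by rewrite /= vj va.
  exact: valid_nxt.
move=> /andP[vj va] H; rewrite !Ex_c //.
apply: lerD; (apply: ler_wpM2l; first by rewrite ?subr_ge0); apply: H.
  by rewrite /= all_rcons vj va /vl r1.
exact: valid_nxt.
Qed.
From mathcomp Require Import zify.

Fixpoint walk (R : realType) (i : nat) (nu : R) (base : seq nat -> R) (be al : seq nat) : R :=
  match be with
  | [::] => base al
  | b :: be' => match al with
    | [::] => if (b < i)%N then 1 else 0
    | a :: al' => if (b < a)%N then nu ^+ size al
                  else if b == a then walk i nu base be' al' else 0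
    end
  end.

Definition baseS (R : realType) (i : nat) (nu : R) j (al : seq nat) : R :=
  match al with
  | [::] => if (j <= i)%N then 1 else 0
  | a :: _ => if (j <= a)%N then nu ^+ size al else 0
  end.

Definition baseC (R : realType) (i : nat) (nu pc : R) j (al : seq nat) : R :=
  match al with
  | [::] => if (j < i)%N then 1 else 0
  | a :: al' => if (j < a)%N then nu ^+ size al
                else if j == a then pc * nu ^+ size al' else 0
  end.

Definition hf (R : realType) (i : nat) (al : seq nat) (p pc : R) x : R :=
  match x with
  | sharp => 0
  | s j be => walk i (p * pc) (baseS i (p * pc) j) be al
  | c j be => walk i (p * pc) (baseC i (p * pc) pc j) be al
  end.

Ltac ifs := repeat (case: ifP => ?); try (exfalso; lia).

Lemma walk_cat (R : realType) i (nu : R) base be1 be2 al :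
  walk i nu base (be1 ++ be2) al = walk i nu (walk i nu base be2) be1 al.
Proof.
elim: be1 al => [|b be1 IH] [|a al] //=; by rewrite IH.
Qed.

Lemma walk_comb (R : realType) i (nu : R) b1 b2 b3 (l m : R) be al :
  l + m = 1 ->
  (take (size be) al = be -> b1 (drop (size be) al) =
     l * b2 (drop (size be) al) + m * b3 (drop (size be) al)) ->
  walk i nu b1 be al = l * walk i nu b2 be al + m * walk i nu b3 be al.
Proof.
move=> lm; elim: be al => [|b be IH] [|a al] /=.
- by apply.
- by apply.
- move=> _; case: ifP => _; by rewrite -mulrDl lm mul1r.
- move=> H; case: ifP => _; first by rewrite -mulrDl lm mul1r.
  case: eqP => [ba|_]; last by rewrite -mulrDl lm mul1r.
  apply: IH => ht; apply: H; by rewrite ht ba.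
Qed.

Lemma walk_ext (R : realType) i (nu : R) b1 b2 P be al :
  (forall al', P al' -> P (behead al')) ->
  (forall al', P al' -> b1 al' = b2 al') -> P al ->
  walk i nu b1 be al = walk i nu b2 be al.
Proof.
move=> Pb H; elim: be al => [|b be IH] [|a al] //= Pal; first exact: H.
  exact: H.
by rewrite IH //; exact: (Pb (a :: al)).
Qed.

Lemma walk_bnd (R : realType) i (nu : R) base be al :
  0 <= nu <= 1 -> (forall al', 0 <= base al' <= 1) ->
  0 <= walk i nu base be al <= 1.
Proof.
move=> /andP[n0 n1] H; elim: be al => [|b be IH] [|a al] //=.
- by case: ifP; rewrite ?ler01 ?lexx.
- case: ifP => _; first by rewrite exprn_ge0 ?exprn_ile1.
  by case: ifP => _; rewrite ?lexx ?ler01.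
Qed.

Lemma baseS_bnd (R : realType) i (nu : R) j al :
  0 <= nu <= 1 -> 0 <= baseS i nu j al <= 1.
Proof.
move=> /andP[n0 n1]; case: al => [|a al] /=; case: ifP; rewrite ?ler01 ?lexx //.
by rewrite exprn_ge0 ?exprn_ile1.
Qed.

Lemma baseC_bnd (R : realType) i (nu pc : R) j al :
  0 <= nu <= 1 -> 0 <= pc <= 1 -> 0 <= baseC i nu pc j al <= 1.
Proof.
move=> /andP[n0 n1] /andP[c0 c1]; case: al => [|a al] /=; case: ifP; rewrite ?ler01 ?lexx //.
  by rewrite exprn_ge0 ?exprn_ile1.
case: ifP; rewrite ?ler01 ?lexx // => _ _.
rewrite mulr_ge0 ?exprn_ge0 //= mulr_ile1 ?exprn_ge0 ?exprn_ile1 //.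
Qed.

Lemma walk_self (R : realType) i (nu : R) al :
  walk i nu (baseS i nu i) al al = 1.
Proof.
elim: al => [|a al IH] /=; first by rewrite leqnn.
by rewrite ltnn eqxx.
Qed.

Lemma baseS_1 (R : realType) r i (nu : R) al :
  (1 <= i)%N -> all (vl r) al -> baseS i nu 1 al = nu ^+ size al.
Proof.
case: al => [|a al] /=; first by move=> ->.
by rewrite /vl => _ /andP[/andP[-> _] _].
Qed.

Lemma inner_back (R : realType) r i (nu : R) m al :
  (i <= r)%N -> vl r m -> all (vl r) al ->
  walk i nu (baseS i nu r.+1) [:: m] al = baseS i nu m.+1 al.
Proof.
rewrite /vl => ir /andP[m1 mr]; case: al => [|a al] /=; first by [].
move=> /andP[/andP[a1 ar] va].
case: ifP => // ma; case: eqP => // _.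
case: al va => [|a' al] /=.
  by case: ifP => //; lia.
by move=> /andP[/andP[_ a'r] _]; case: ifP => //; lia.
Qed.

Lemma all_behead r (al : seq nat) : all (vl r) al -> all (vl r) (behead al).
Proof. by case: al => //= a al /andP[]. Qed.

Lemma h_nxt (R : realType) r i al (p pc : R) j be :
  (1 <= i <= r)%N -> all (vl r) al -> vl r j -> all (vl r) be ->
  hf i al p pc (nxt r j be) = walk i (p * pc) (baseS i (p * pc) j.+1) be al.
Proof.
move=> /andP[i1 ir] va vj vbe; rewrite /nxt; case: ltnP => jr //.
have -> : j = r by move: vj; rewrite /vl; lia.
pose f be := walk i (p * pc) (baseS i (p * pc) r.+1) be al.
apply: (@backt_gen R r (hf i al p pc) f) => //.
- rewrite /f /=; clear f; case: al va => [|a al] /=; first by case: ifP => //; lia.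
  by rewrite /vl => /andP[/andP[_ ar] _]; case: ifP => //; lia.
- move=> a0 va0; rewrite /f -cats1 walk_cat.
  apply: (@walk_ext _ _ _ _ _ (all (vl r))) => //; first exact: all_behead.
  move=> al' val'; apply: inner_back => //; rewrite /vl leqnn andbT; lia.
- move=> a0 m va0 vm mr; rewrite /f -cats1 walk_cat /=.
  apply: (@walk_ext _ _ _ _ _ (all (vl r))) => //; first exact: all_behead.
  by move=> al' val'; rewrite -(inner_back (r:=r)).
Qed.

Lemma baseS_id (R : realType) i (p pc : R) j al :
  (al = [::] -> j != i) ->
  baseS i (p * pc) j al = p * baseC i (p * pc) pc j al + (1 - p) * baseS i (p * pc) j.+1 al.
Proof.
case: al => [|a al] /=.
  move=> /(_ erefl) ji; ifs; ring.
move=> _; ifs; rewrite ?exprS; ring.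
Qed.

Lemma baseC_id (R : realType) r i (p pc : R) j al :
  (1 <= i)%N -> all (vl r) al ->
  baseC i (p * pc) pc j al =
  pc * walk i (p * pc) (baseS i (p * pc) 1) [:: j] al + (1 - pc) * baseS i (p * pc) j.+1 al.
Proof.
move=> i1; case: al => [|a al] /=; first by move=> _; ifs; ring.
move=> /andP[_ va]; rewrite (baseS_1 _ i1 va); ifs; ring.
Qed.

Lemma h_harm (R : realType) r i al (p pc : R) x :
  (1 <= i <= r)%N -> all (vl r) al -> valid r x -> x != sharp -> x != s i al ->
  Ex r p pc (hf i al p pc) x = hf i al p pc x.
Proof.
move=> ir va; case: x => [|j be|j be] //= /andP[vj vbe] _ ne.
  rewrite Ex_s // h_nxt //=; symmetry; apply: walk_comb; first ring.
  move=> ht; apply: baseS_id => hd; apply/eqP => ji; move/negP: ne; apply.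
  have -> : al = be by rewrite -(cat_take_drop (size be) al) ht hd cats0.
  by rewrite ji eqxx.
rewrite Ex_c // h_nxt //= -cats1 walk_cat; symmetry; apply: walk_comb; first ring.
move=> _; apply: (baseC_id (r := r)); first by case/andP: ir.
by rewrite -(cat_take_drop (size be) al) all_cat in va; case/andP: va.
Qed.

Definition sumd (R : realType) r (be : seq nat) : R := \sum_(b <- be) (r%:R - b%:R).

Definition Df (R : realType) r (pc a : R) x : R :=
  match x with
  | sharp => 0
  | s j be => a * (r%:R + 1 - j%:R + sumd R r be)
  | c j be => 1 + pc * r%:R * a + a * (r%:R - j%:R + sumd R r be)
  end.

Lemma sumd_rcons (R : realType) r be m : sumd R r (rcons be m) = sumd R r be + (r%:R - m%:R).
Proof. by rewrite /sumd -cats1 big_cat big_seq1. Qed.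

Lemma sumd_ge0 (R : realType) r be : all (vl r) be -> 0 <= sumd R r be.
Proof.
move=> vb; rewrite /sumd big_seq; apply: sumr_ge0 => b bin.
have := allP vb b bin; rewrite /vl => /andP[_ br]; by rewrite subr_ge0 ler_nat.
Qed.

Lemma D_nxt (R : realType) r (pc a : R) j be : vl r j -> all (vl r) be ->
  Df r pc a (nxt r j be) = a * (r%:R - j%:R + sumd R r be).
Proof.
move=> vj vbe; rewrite /nxt; case: ltnP => jr.
  by rewrite /= -natr1; congr (_ * _); ring.
have -> : j = r by move: vj; rewrite /vl; lia.
rewrite subrr add0r.
apply: (@backt_gen R r (Df r pc a) (fun be => a * sumd R r be)) => //.
- by rewrite /sumd big_nil mulr0.
- by move=> a0 _; rewrite sumd_rcons subrr addr0.
- by move=> a0 m _ _ _; rewrite /= sumd_rcons -natr1; congr (_ * _); ring.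
Qed.

Lemma D_harm (R : realType) r (p pc a : R) x :
  a * (1 - p * pc * r%:R) = 1 + p -> valid r x -> x != sharp ->
  Ex r p pc (Df r pc a) x = Df r pc a x - 1.
Proof.
move=> ha; case: x => [|j be|j be] //= /andP[vj vbe] _.
  rewrite Ex_s // D_nxt //=; lra.
rewrite Ex_c // D_nxt //= sumd_rcons; lra.
Qed.

Lemma D_ge0 (R : realType) r (pc a : R) x : 0 <= a -> 0 <= pc -> valid r x -> 0 <= Df r pc a x.
Proof.
move=> a0 c0; case: x => [|j be|j be] //= /andP[vj vbe].
  have := sumd_ge0 R vbe; move: vj; rewrite /vl => /andP[_ jr].
  have : (j%:R <= r%:R :> R) by rewrite ler_nat.
  move=> *; apply: mulr_ge0 => //; lra.
have := sumd_ge0 R vbe; move: vj; rewrite /vl => /andP[_ jr].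
have : (j%:R <= r%:R :> R) by rewrite ler_nat.
move=> *; apply: addr_ge0; first by apply: addr_ge0 => //; rewrite !mulr_ge0.
apply: mulr_ge0 => //; lra.
Qed.

Lemma Ex_sumS (R : realType) r (p pc : R) (l : seq nat) (g : nat -> state -> R) x :
  Ex r p pc (fun z => \sum_(m <- l) g m z) x = \sum_(m <- l) Ex r p pc (g m) x.
Proof.
rewrite /Ex exchange_big /=; apply: eq_bigr => w _; by rewrite mulr_sumr.
Qed.

Lemma Ex_ext (R : realType) r (p pc : R) g1 g2 x :
  (forall z, g1 z = g2 z) -> Ex r p pc g1 x = Ex r p pc g2 x.
Proof. by move=> H; rewrite /Ex; apply: eq_bigr => w _; rewrite H. Qed.

Definition HH (R : realType) r (p pc : R) y N x := \sum_(0 <= m < N) hit r p pc y m x.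

Lemma hit0 (R : realType) r (p pc : R) y x : hit r p pc y 0 x = (x == y)%:R.
Proof. by []. Qed.

Lemma hitS (R : realType) r (p pc : R) y n x :
  hit r p pc y n.+1 x = if x == y then 0 else Ex r p pc (hit r p pc y n) x.
Proof. by rewrite /hit iterS. Qed.

Lemma hit_ge0 (R : realType) r (p pc : R) y n x : (1 <= r)%N ->
  0 <= p <= 1 -> 0 <= pc <= 1 -> valid r x -> 0 <= hit r p pc y n x.
Proof.
move=> r1 hp hc; elim: n x => [|n IH] x vx; first by rewrite hit0 ler0n.
rewrite hitS; case: eqP => // _.
have := @Ex_mono R r p pc (fun _ => 0) (hit r p pc y n) x r1 hp hc vx.
rewrite Ex_const //; apply => z vz; exact: IH.
Qed.

Lemma HH0 (R : realType) r (p pc : R) y x : HH r p pc y 0 x = 0.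
Proof. by rewrite /HH big_geq. Qed.

Lemma HHS (R : realType) r (p pc : R) y N x :
  HH r p pc y N.+1 x = if x == y then 1 else Ex r p pc (HH r p pc y N) x.
Proof.
rewrite /HH big_nat_recl // hit0; under eq_bigr do rewrite hitS.
case: eqP => _ /=.
  by rewrite big1 ?addr0.
by rewrite add0r /HH Ex_sumS.
Qed.

Lemma HHSr (R : realType) r (p pc : R) y N x :
  HH r p pc y N.+1 x = HH r p pc y N x + hit r p pc y N x.
Proof. by rewrite /HH big_nat_recr. Qed.

Lemma HH_le1 (R : realType) r (p pc : R) y N x : (1 <= r)%N ->
  0 <= p <= 1 -> 0 <= pc <= 1 -> valid r x -> HH r p pc y N x <= 1.
Proof.
move=> r1 hp hc; elim: N x => [|N IH] x vx; first by rewrite HH0 ler01.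
rewrite HHS; case: eqP => // _.
have := @Ex_mono R r p pc (HH r p pc y N) (fun _ => 1) x r1 hp hc vx.
rewrite Ex_const //; apply => z vz; exact: IH.
Qed.

Lemma HH_mono (R : realType) r (p pc : R) y N M x : (1 <= r)%N ->
  0 <= p <= 1 -> 0 <= pc <= 1 -> valid r x -> (N <= M)%N -> HH r p pc y N x <= HH r p pc y M x.
Proof.
move=> r1 hp hc vx; elim: M => [|M IH]; first by rewrite leqn0 => /eqP ->.
rewrite leq_eqVlt => /orP[/eqP -> //|]; rewrite ltnS => /IH h.
apply: (le_trans h); rewrite HHSr lerDl; exact: hit_ge0.
Qed.

Lemma mean_id (R : realType) r (p pc : R) y N x :
  \sum_(0 <= m < N) m%:R * hit r p pc y m x =
  \sum_(0 <= k < N) (HH r p pc y N x - HH r p pc y k.+1 x).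
Proof.
elim: N => [|N IH]; first by rewrite !big_geq.
rewrite big_nat_recr //= IH [in RHS]big_nat_recr //= subrr addr0.
rewrite HHSr.
rewrite [in RHS](eq_bigr (fun k => (HH r p pc y N x - HH r p pc y k.+1 x) + hit r p pc y N x)); last by move=> k _; ring.
by rewrite [in RHS]big_split /= sumr_const_nat subn0 mulr_natl.
Qed.

Lemma Ex_addc (R : realType) r (p pc : R) g k x : valid r x ->
  Ex r p pc (fun z => g z + k) x = Ex r p pc g x + k.
Proof.
move=> vx; rewrite (@Ex_ext R r p pc _ (fun z => 1 * g z + k * (fun _ => 1) z)); last by move=> z; ring.
by rewrite Ex_lin Ex_const // mul1r mulr1.
Qed.

Lemma Ex_subc (R : realType) r (p pc : R) g k x : valid r x ->
  Ex r p pc (fun z => k - g z) x = k - Ex r p pc g x.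
Proof.
move=> vx; rewrite (@Ex_ext R r p pc _ (fun z => k * (fun _ => 1) z + (-1) * g z)); last by move=> z; ring.
by rewrite Ex_lin Ex_const // mulr1; ring.
Qed.

Lemma S_le (R : realType) r (p pc : R) y (V : state -> R) : (1 <= r)%N ->
  0 <= p <= 1 -> 0 <= pc <= 1 ->
  (forall z, valid r z -> 0 <= V z) ->
  (forall z, valid r z -> z != y -> 1 + Ex r p pc V z <= V z) ->
  forall N x, valid r x -> \sum_(0 <= k < N) (1 - HH r p pc y k.+1 x) <= V x.
Proof.
move=> r1 hp hc V0 HV; elim=> [|N IH] x vx; first by rewrite big_geq // V0.
rewrite big_nat_recl //.
case: (eqVneq x y) => [exy|ne].
  rewrite exy in vx *; rewrite HHS eqxx subrr add0r big1; first exact: V0.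
  by move=> k _; rewrite HHS eqxx subrr.
rewrite HHS (negbTE ne).
rewrite (@Ex_ext R r p pc _ (fun _ => 0)); last by move=> z; rewrite HH0.
rewrite Ex_const // subr0.
rewrite (eq_bigr (fun k => Ex r p pc (fun z => 1 - HH r p pc y k.+1 z) x)); last first.
  by move=> k _; rewrite HHS (negbTE ne) Ex_subc.
rewrite -Ex_sumS.
apply: le_trans (HV x vx ne); rewrite lerD2l.
apply: Ex_mono => // z vz; exact: IH.
Qed.

Lemma tail_le (R : realType) r (p pc : R) y N x : (1 <= r)%N ->
  0 <= p <= 1 -> 0 <= pc <= 1 -> valid r x ->
  N%:R * (1 - HH r p pc y N x) <= \sum_(0 <= k < N) (1 - HH r p pc y k.+1 x).
Proof.
move=> r1 hp hc vx.
have -> : N%:R * (1 - HH r p pc y N x) = \sum_(0 <= k < N) (1 - HH r p pc y N x).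
  by rewrite sumr_const_nat subn0 mulr_natl.
apply: ler_sum_nat => k /andP[_ kN]; rewrite lerD2l lerN2.
exact: HH_mono.
Qed.

Lemma hf_bnd (R : realType) i al (p pc : R) x :
  0 <= p <= 1 -> 0 <= pc <= 1 -> 0 <= hf i al p pc x <= 1.
Proof.
move=> hp hc.
have hn : 0 <= p * pc <= 1.
  case/andP: hp => ? ?; case/andP: hc => ? ?.
  by rewrite mulr_ge0 //= mulr_ile1.
case: x => [|j be|j be] /=; first by rewrite lexx ler01.
  apply: walk_bnd => // al'; exact: baseS_bnd.
apply: walk_bnd => // al'; exact: baseC_bnd.
Qed.

Lemma h_lower (R : realType) r i al (p pc : R) : (1 <= r)%N ->
  0 <= p <= 1 -> 0 <= pc <= 1 -> (1 <= i <= r)%N -> all (vl r) al ->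
  forall N x, valid r x ->
  HH r p pc (s i al) N x <= hf i al p pc x + N%:R * (p * pc) ^+ size al.
Proof.
move=> r1 hp hc ir va.
have hn : 0 <= p * pc.
  case/andP: hp => ? ?; case/andP: hc => ? ?; exact: mulr_ge0.
have nt0 : 0 <= (p * pc) ^+ size al by rewrite exprn_ge0.
elim=> [|N IH] x vx.
  by rewrite HH0 mul0r addr0; case/andP: (hf_bnd i al x hp hc).
rewrite HHS; case: eqP => [->|/eqP ne].
  rewrite /= walk_self lerDl; apply: mulr_ge0 => //.
case: (eqVneq x sharp) => [->|ns].
  rewrite Ex_sharp; apply: le_trans (IH _ _) _; first by rewrite /= /vl r1.
  rewrite /= (baseS_1 _ _ va); last by case/andP: ir.
  rewrite -natr1 add0r; lra.
apply: le_trans (Ex_mono (g2 := fun z => hf i al p pc z + N%:R * (p * pc) ^+ size al) r1 hp hc vx _) _.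
  exact: IH.
by rewrite Ex_addc // h_harm // lerD2l ler_wpM2r // ler_nat.
Qed.


Lemma M_ge (R : realType) r (p pc : R) y N N' x : (1 <= r)%N ->
  0 <= p <= 1 -> 0 <= pc <= 1 -> valid r x -> (N <= N')%N ->
  N%:R * (HH r p pc y N' x - HH r p pc y N x) <= \sum_(0 <= m < N') m%:R * hit r p pc y m x.
Proof.
move=> r1 hp hc vx NN'; rewrite mean_id (big_cat_nat (leq0n N) NN') /=.
have -> : N%:R * (HH r p pc y N' x - HH r p pc y N x) =
   \sum_(0 <= k < N) (HH r p pc y N' x - HH r p pc y N x).
  by rewrite sumr_const_nat subn0 mulr_natl.
rewrite -[X in X <= _]addr0; apply: lerD.
  apply: ler_sum_nat => k /andP[_ kN]; rewrite lerD2l lerN2; exact: HH_mono.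
rewrite big_nat_cond; apply: sumr_ge0 => k /andP[/andP[_ kN'] _].
rewrite subr_ge0; exact: HH_mono.
Qed.

Lemma M_le (R : realType) r (p pc : R) y N x : (1 <= r)%N ->
  0 <= p <= 1 -> 0 <= pc <= 1 -> valid r x ->
  \sum_(0 <= m < N) m%:R * hit r p pc y m x <= \sum_(0 <= k < N) (1 - HH r p pc y k.+1 x).
Proof.
move=> r1 hp hc vx; rewrite mean_id; apply: ler_sum_nat => k _.
by rewrite lerD2r; exact: HH_le1.
Qed.

Lemma hitP_fun (R : realType) r (p pc : R) x y :
  hitP r p pc x y = fun n => hit r p pc y n x.
Proof. by apply: funext => n; exact: hitPE. Qed.

Unset Implicit Arguments.

Theorem corollary3p6 (R : realType) (r : nat) (p pc : R) :
  (1 <= r)%N -> 0 <= p <= 1 -> 0 <= pc <= 1 ->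
  0 < p * pc -> p * pc * r%:R < 1 ->
  exists c1 c2 : R, 0 < c1 /\ c1 <= c2 /\
    forall (t : nat) (alpha : seq nat) (i : nat),
      size alpha = t -> all (fun a => (1 <= a <= r)%N) alpha ->
      (1 <= i <= r)%N ->
      ((c1 * (p * pc) ^- t)%:E <= mhit r p pc sharp (s i alpha))%E /\
      (mhit r p pc sharp (s i alpha) <= (c2 * (p * pc) ^- t)%:E)%E.
Proof.
move=> r1 hp hc nu0 nur.
have rR : (1 <= r%:R :> R) by rewrite ler1n.
have nu1 : p * pc < 1.
  apply: le_lt_trans nur; rewrite ler_peMr //; exact: ltW.
have den : 0 < 1 - p * pc * r%:R by rewrite subr_gt0.
pose a := (1 + p) / (1 - p * pc * r%:R).
have ha : a * (1 - p * pc * r%:R) = 1 + p by rewrite /a divfK // gt_eqF.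
have a0 : 0 <= a by rewrite /a divr_ge0 ?ltW //; case/andP: hp => ? ?; lra.
have ar0 : 0 <= a * r%:R by rewrite mulr_ge0.
exists (1 / 16), (1 + a * r%:R); split; first lra.
split; first lra.
move=> t al i st va ir; subst t.
set T := (p * pc) ^+ size al.
have T0 : 0 < T by rewrite exprn_gt0.
set K := (1 + a * r%:R) * (p * pc) ^- size al.
have KT : K * T = 1 + a * r%:R by rewrite /K mulfVK // gt_eqF.
have K0 : 0 <= K by rewrite /K mulr_ge0 // ?invr_ge0 ?ltW //; lra.
set y := s i al.
pose V z := Df r pc a z + K * (1 - hf i al p pc z).
have V0 : forall z, valid r z -> 0 <= V z.
  move=> z vz; apply: addr_ge0; first by apply: D_ge0 => //; case/andP: hc.
  by apply: mulr_ge0 => //; case/andP: (hf_bnd i al z hp hc) => _ h1; lra.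
have vs1 : valid r (s 1 [::]) by rewrite /= /vl r1.
have hs1 : hf i al p pc (s 1 [::]) = T.
  by rewrite /= (baseS_1 _ _ va) //; case/andP: ir.
have HV : forall z, valid r z -> z != y -> 1 + Ex r p pc V z <= V z.
  move=> z vz nzy; case: (eqVneq z sharp) => [->|ns].
    rewrite Ex_sharp /V hs1 /= /sumd big_nil; lra.
  rewrite (@Ex_ext R r p pc _ (fun w => 1 * Df r pc a w + K * (fun w => 1 - hf i al p pc w) w));
    last by move=> w; rewrite /V mul1r.
  rewrite Ex_lin Ex_subc // h_harm // D_harm // /V; lra.
have Sle := S_le r1 hp hc V0 HV.
have Vs : V sharp = K by rewrite /V /=; ring.
have F1 : forall N, HH r p pc y N sharp <= 1 by move=> N; exact: HH_le1.
have F2 : forall N, N%:R * (1 - HH r p pc y N sharp) <= K.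
  by move=> N; rewrite -Vs; apply: le_trans (tail_le _ _ r1 hp hc _) (Sle _ _ _).
have F3 : forall N, \sum_(0 <= m < N) m%:R * hit r p pc y m sharp <= K.
  by move=> N; rewrite -Vs; apply: le_trans (M_le _ _ r1 hp hc _) (Sle _ _ _).
have HH1 : HH r p pc y 1 sharp = 0 by rewrite HHS /= Ex_sharp HH0.
have ser1 : (\sum_(0 <= n <oo) (hitP r p pc sharp y n)%:E = 1)%E.
  rewrite hitP_fun.
  have pe : forall n, (\sum_(0 <= k < n) (hit r p pc y k sharp)%:E = (HH r p pc y n sharp)%:E)%E.
    by move=> n; rewrite sumEFin.
  apply/eqP; rewrite eq_le; apply/andP; split.
    apply: lime_le; first by apply: is_cvg_nneseries => n _ _; rewrite lee_fin; exact: hit_ge0.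
    by apply: nearW => n; rewrite pe lee_fin.
  apply/lee_subgt0Pr => e e0.
  pose N := (Num.truncn (K / e)).+1.
  have hN : K / e < N%:R by exact: truncnS_gt.
  rewrite ltr_pdivrMr // in hN.
  apply: le_trans (nneseries_lim_ge N _); last first.
    by move=> n _ _; rewrite lee_fin; exact: hit_ge0.
  rewrite pe -EFinB lee_fin.
  have := F2 N; have N0 : (0 < N%:R :> R) by rewrite ltr0n.
  case: (lerP (1 - e) (HH r p pc y N sharp)) => // hlt.
  have : N%:R * e < N%:R * (1 - HH r p pc y N sharp) by rewrite ltr_pM2l //; lra.
  lra.
have mnn : forall n, (0 <= (n%:R * hit r p pc y n sharp)%:E)%E.
  by move=> n; rewrite lee_fin mulr_ge0 // hit_ge0.
rewrite /mhit ser1 eqxx hitP_fun; split; last first.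
  apply: lime_le; first by apply: is_cvg_nneseries => n _ _; exact: mnn.
  by apply: nearW => n; rewrite sumEFin lee_fin; exact: F3.
set X := (p * pc) ^- size al.
have XT : X * T = 1 by rewrite /X mulVf // gt_eqF.
have X0 : 0 < X by rewrite /X invr_gt0.
pose N := Num.truncn (X / 2).
have hN1 : N%:R <= X / 2 by rewrite truncn_le; lra.
have hN2 : X / 2 < N.+1%:R by exact: truncnS_gt.
pose N' := (N + (Num.truncn (4 * K)).+1)%N.
have hN' : 4 * K < N'%:R.
  rewrite /N' natrD; have := truncnS_gt (4 * K); have := ler0n R N; lra.
have HN' : 3 / 4 <= HH r p pc y N' sharp.
  have := F2 N'; case: (lerP (3 / 4) (HH r p pc y N' sharp)) => // hlt.
  have : N'%:R * (1 / 4) < N'%:R * (1 - HH r p pc y N' sharp).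
    rewrite ltr_pM2l //; first lra.
    by apply: le_lt_trans hN'; rewrite mulr_ge0.
  lra.
have HN : HH r p pc y N sharp <= 1 / 2.
  apply: le_trans (h_lower r1 hp hc ir va N (isT : valid r sharp)) _.
  rewrite /= add0r -/T.
  have : N%:R * T <= X / 2 * T by rewrite ler_wpM2r // ltW.
  lra.
have M1 := M_ge y r1 hp hc (isT : valid r sharp) (leq_addr _ N : (N <= N')%N).
have N'1 : (1 <= N')%N by rewrite /N' addnS.
have M2 := M_ge y r1 hp hc (isT : valid r sharp) N'1.
rewrite HH1 in M2.
have M3 : N%:R * (1 / 4) <= N%:R * (HH r p pc y N' sharp - HH r p pc y N sharp).
  by rewrite ler_wpM2l //; lra.
apply: le_trans (nneseries_lim_ge N' _); last by move=> n _ _; exact: mnn.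
rewrite sumEFin lee_fin.
have : X / 2 < N%:R + 1 by rewrite natr1.
lra.
Qed.
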